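(* Assume (A1), (A2) and (A4). Let $\theta'\in(\underline{\theta},\overline{\theta}]$ and let $F_{\theta'}$ be the distribution $F$ conditional on $\theta\in[\underline{\theta},\theta']$. Suppose each type $\theta$ values the good at $\overline{u}(\theta)=v(x^e(\theta))+\theta x^e(\theta)$ (i.e., consumes its efficient quantity $x^e(\theta)$), and the seller charges a single uniform price $p$, selling to exactly the types with $\overline{u}(\theta)\ge p$. Then the revenue $p\cdot\Pr_{F_{\theta'}}(\overline{u}(\theta)\ge p)$ is maximized at $p=\overline{u}(\underline{\theta})$.
   Context: Fix $\underline{\theta}<\overline{\theta}$ and $\overline{x}>0$. The buyer's type $\theta\in[\underline{\theta},\overline{\theta}]$ has CDF $F$ with density $f$. (A1): $v:[0,\overline{x}]\to\mathbb{R}$ strictly concave, continuously differentiable, $v(0)=0$. $x^e(\theta)$ is the unique maximizer of $v(x')+\theta x'$ over $x'\in[0,\overline{x}]$. (A2): $0<m\le f\le M$ for constants $m,M$, and $\theta-\frac{1-F(\theta)}{f(\theta)}$ strictly increasing. (A4): $v(x^e(\theta))+\big(\theta-\frac{1-F(\theta)}{f(\theta)}\big)x^e(\theta)\ge0$ for all $\theta$. *)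

(* Defs.v *)
From HB Require Import structures.
From mathcomp Require Import all_boot all_order all_algebra.
From mathcomp Require Import all_classical all_reals all_analysis.
Set Implicit Arguments. Unset Strict Implicit. Unset Printing Implicit Defensive.
Import Order.TTheory GRing.Theory Num.Theory.
Import numFieldNormedType.Exports.
Local Open Scope classical_set_scope.
Local Open Scope ring_scope.

Definition dmass {R : realType} (f : R -> R) (A : set R) : R :=
  Rintegral (@lebesgue_measure R) A f.

Definition dens_cdf {R : realType} (tl : R) (f : R -> R) (t : R) : R :=
  dmass f `[tl, t].

Definition strictly_concave_on {R : realType} (xbar : R) (v : R -> R) : Prop :=
  forall a b t : R, 0 <= a <= xbar -> 0 <= b <= xbar -> a != b -> 0 < t < 1 ->
    t * v a + (1 - t) * v b < v (t * a + (1 - t) * b).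

Definition C1_on {R : realType} (xbar : R) (v : R -> R) : Prop :=
  {within `[0, xbar], continuous v} /\
  exists dv : R -> R, {within `[0, xbar], continuous dv} /\
    forall x : R, 0 < x < xbar -> is_derive x 1 v (dv x).

Definition is_unique_maximizer {R : realType} (xbar : R) (v : R -> R) (t x : R) : Prop :=
  0 <= x <= xbar /\
  forall x' : R, 0 <= x' <= xbar -> x' != x -> v x' + t * x' < v x + t * x.

Definition virt {R : realType} (tl : R) (f : R -> R) (t : R) : R :=
  t - (1 - dens_cdf tl f t) / f t.

Definition ubar {R : realType} (v xe : R -> R) (t : R) : R :=
  v (xe t) + t * xe t.

Definition revenue {R : realType} (tl t' : R) (f v xe : R -> R) (p : R) : R :=
  p * (dmass f ([set t | tl <= t <= t'] `&` [set t | p <= ubar v xe t])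
       / dens_cdf tl f t').

(* Main.v *)
Require Import Defs.
From HB Require Import structures.
From mathcomp Require Import all_boot all_order all_algebra.
From mathcomp Require Import all_classical all_reals all_analysis.
From mathcomp Require Import ring lra.
Import Order.TTheory GRing.Theory Num.Theory.
Import numFieldNormedType.Exports.
Local Open Scope classical_set_scope.
Local Open Scope ring_scope.

Theorem lemma6 (R : realType) (tl th xbar m M : R) (f v xe : R -> R) (t' : R) :
  tl < th -> 0 < xbar ->
  (* (A1) *)
  strictly_concave_on xbar v -> C1_on xbar v -> v 0 = 0 ->
  (forall t, tl <= t <= th -> is_unique_maximizer xbar v t (xe t)) ->
  (* f is a density on [tl, th] with CDF F = dens_cdf tl f *)
  measurable_fun [set t | tl <= t <= th] f ->
  dens_cdf tl f th = 1 ->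
  (* (A2) *)
  0 < m ->
  (forall t, tl <= t <= th -> m <= f t <= M) ->
  (forall s t, tl <= s <= th -> tl <= t <= th -> s < t -> virt tl f s < virt tl f t) ->
  (* (A4) *)
  (forall t, tl <= t <= th -> 0 <= v (xe t) + virt tl f t * xe t) ->
  (* theta' in (tl, th] *)
  tl < t' <= th ->
  forall p : R, revenue tl t' f v xe p <= revenue tl t' f v xe (ubar v xe tl).
Proof.
move=> ltth xbar0 _ _ v00 hmax fmeas Fth m0 fmM _ A4 /andP[tlt' t'th] p.
set u := ubar v xe.
set F := dens_cdf tl f.
have xe01 : forall t, tl <= t <= th -> 0 <= xe t <= xbar.
  by move=> t ht; case: (hmax t ht).
have env : forall t s, tl <= t <= th -> tl <= s <= th -> u s + (t - s) * xe s <= u t.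
  move=> t s ht hs; have [_ H] := hmax t ht.
  have : v (xe s) + t * xe s <= v (xe t) + t * xe t.
    have [->|ne] := eqVneq (xe s) (xe t); first by [].
    by apply/ltW/H => //; apply: xe01.
  rewrite /u /ubar; lra.
have u_ge0 : 0 <= u tl.
  have htl : tl <= tl <= th by rewrite lexx ltW.
  have [_ H] := hmax tl htl.
  have [e0|ne] := eqVneq 0 (xe tl).
    by rewrite /u /ubar -e0 v00 mulr0 addr0.
  have := H 0; rewrite lexx ltW // v00 mulr0 addr0 => /(_ isT ne) /ltW.
  by rewrite /u /ubar.
have u_mono : forall a b, tl <= a -> a <= b -> b <= th -> u a <= u b.
  move=> a b ha ab bh.
  have ha' : tl <= a <= th by rewrite ha (le_trans ab bh).
  have hb' : tl <= b <= th by rewrite bh (le_trans ha ab).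
  have := env b a hb' ha'; have := xe01 a ha'; move=> /andP[x0 _].
  have : 0 <= (b - a) * xe a by rewrite mulr_ge0 // subr_ge0.
  lra.
have xe_mono : forall a b, tl <= a -> a <= b -> b <= th -> xe a <= xe b.
  move=> a b ha ab bh.
  have ha' : tl <= a <= th by rewrite ha (le_trans ab bh).
  have hb' : tl <= b <= th by rewrite bh (le_trans ha ab).
  have [->|lab] := eqVneq a b; first by [].
  have lt : a < b by rewrite lt_neqAle lab.
  have := env b a hb' ha'; have := env a b ha' hb'.
  move=> h1 h2.
  have : (b - a) * xe a <= (b - a) * xe b by lra.
  by rewrite ler_pM2l // subr_gt0.
have fint : (@lebesgue_measure R).-integrable `[tl, th] (EFin \o f).
  apply: measurable_bounded_integrable => //.
  all: try by [].
    have := lebesgue_measure_itv `[tl, th]%R.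
    rewrite /= lte_fin ltth => -> /=.
    by rewrite ltry.
  exists M; split; first exact: num_real.
  move=> y My x /=; rewrite in_itv /= => hx.
  have /andP[mf fM] := fmM x hx.
  by rewrite ger0_norm ?(le_trans (ltW m0) mf) // (le_trans fM (ltW My)).
set mu := (@lebesgue_measure R).
have bint : forall (A : set R) (g : R -> R) (B : R), measurable A -> A `<=` `[tl, th] ->
    measurable_fun A g -> (forall x, A x -> `|g x| <= B) -> mu.-integrable A (EFin \o g).
  move=> A g B mA sA mg gB; apply: measurable_bounded_integrable => //.
    have h1 : (mu A <= mu `[tl, th]%classic)%E by apply: le_measure => //; rewrite inE.
    have h2 : (mu `[tl, th]%classic < +oo)%E.
      have := lebesgue_measure_itv `[tl, th]%R.
      by rewrite /= lte_fin ltth /mu => -> /=; rewrite ltry.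
    exact: le_lt_trans h1 h2.
  exists B; split; first exact: num_real.
  move=> y By x Ax; exact: (le_trans (gB x Ax) (ltW By)).
have intS : forall (A : set R), measurable A -> A `<=` `[tl, th] ->
    mu.-integrable A (EFin \o f).
  by move=> A mA sA; apply: integrableS fint.
have Fdiff : forall a b, tl <= a -> a <= b -> b <= th ->
    F b - F a = \int[mu]_(x in `]a, b]) f x.
  move=> a b ha ab bh.
  rewrite /F /dens_cdf /dmass.
  have := @Rintegral_itvB R f (BLeft tl) (BRight b) a.
  apply.
  - apply: intS => // x /=; rewrite !in_itv /= => /andP[h1 h2].
    by rewrite h1 (le_trans h2 bh).
  - by rewrite bnd_simp.
  - by rewrite bnd_simp.
have Flow : forall a b c K, tl <= a -> a <= b -> b <= th ->
    (forall t, a < t <= b -> c <= K * f t) -> c * (b - a) <= K * (F b - F a).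
  move=> a b c K ha ab bh hc.
  have mab : measurable (`]a, b] : set R) by [].
  have iab : mu.-integrable `]a, b] (EFin \o f).
    apply: intS => // x /=; rewrite !in_itv /= => /andP[h1 h2].
    by rewrite (le_trans ha (ltW h1)) (le_trans h2 bh).
  rewrite Fdiff // -RintegralZl //.
  have -> : c * (b - a) = \int[mu]_(x in `]a, b]) c.
    rewrite Rintegral_cst //.
    have := lebesgue_measure_itv `]a, b]%R.
    rewrite /= lte_fin; case: ltP => [lab|ba] -> /=.
      by [].
    have -> : b = a by apply/le_anti; rewrite ab ba.
    by rewrite subrr mulr0.
  apply: le_Rintegral => //.
  - apply: (bint _ _ `|c|) => //.
      move=> x /=; rewrite !in_itv /= => /andP[h1 h2].
      by rewrite (le_trans ha (ltW h1)) (le_trans h2 bh).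
  - apply: (bint _ _ (`|K| * M)) => //.
      move=> x /=; rewrite !in_itv /= => /andP[h1 h2].
      by rewrite (le_trans ha (ltW h1)) (le_trans h2 bh).
      apply: (measurable_realfun.measurable_funM (f := cst K)) => //.
      apply: (measurable_funS _ _ fmeas).
      + by have -> : [set t | tl <= t <= th] = `[tl, th]%classic by [].
      + move=> x /=; rewrite !in_itv /= => /andP[h1 h2].
        by rewrite (le_trans ha (ltW h1)) (le_trans h2 bh).
    move=> x /=; rewrite in_itv /= => /andP[h1 h2].
    have hx : tl <= x <= th by rewrite (le_trans ha (ltW h1)) (le_trans h2 bh).
    have /andP[mf fM] := fmM x hx.
    rewrite normrM ler_wpM2l // ger0_norm //.
    exact: le_trans (ltW m0) mf.
have fpos : forall t, tl <= t <= th -> 0 < f t.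
  by move=> t ht; have /andP[mf _] := fmM t ht; exact: lt_le_trans mf.
have Fmono : forall a b, tl <= a -> a <= b -> b <= th -> F a <= F b.
  move=> a b ha ab bh.
  have := Flow a b 0 1 ha ab bh.
  rewrite mul0r mul1r subr_ge0; apply => t /andP[h1 h2].
  rewrite mul1r; apply/ltW/fpos.
  by rewrite (le_trans ha (ltW h1)) (le_trans h2 bh).
have Ftl : F tl = 0.
  by rewrite /F /dens_cdf /dmass set_itv1 Rintegral_set1.
have Ft'le1 : F t' <= 1.
  by rewrite -Fth; apply: Fmono => //; exact: ltW.
have Ft'pos : 0 < F t'.
  have := Flow tl t' m 1 (lexx tl) (ltW tlt') t'th.
  rewrite Ftl subr0 mul1r => H.
  apply: lt_le_trans (H _); first by rewrite mulr_gt0 // subr_gt0.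
  move=> t /andP[h1 h2].
  have ht : tl <= t <= th by rewrite (ltW h1) (le_trans h2 t'th).
  by rewrite mul1r; have /andP[] := fmM t ht.
have Fmass : forall c, tl <= c -> c <= t' -> dmass f `[c, t'] = F t' - F c.
  move=> c hc ct; rewrite Fdiff //.
  rewrite /dmass Rintegral_itv_obnd_cbnd //.
  apply: intS => // x /=; rewrite !in_itv /= => /andP[h1 h2].
  by rewrite (le_trans hc (ltW h1)) (le_trans h2 t'th).
have A4' : forall t, tl <= t <= th -> (1 - F t) * xe t <= u t * f t.
  move=> t ht; have := A4 t ht; rewrite /virt -/F.
  have fp := fpos t ht.
  rewrite -(pmulr_rge0 _ fp).
  have -> : f t * (v (xe t) + (t - (1 - F t) / f t) * xe t) =
            u t * f t - (1 - F t) * xe t.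
    rewrite /u /ubar; field; exact: lt0r_neq0.
  by rewrite subr_ge0.
set G := fun s => u s * (F t' - F s).
have step : forall a b, tl <= a -> a <= b -> b <= t' ->
    - ((b - a) * (xe b - xe a)) - xbar * M * (b - a) ^+ 2 <= G a - G b.
  move=> a b ha ab bt.
  have bh : b <= th := le_trans bt t'th.
  have ha' : tl <= a <= th by rewrite ha (le_trans ab bh).
  have hb' : tl <= b <= th by rewrite (le_trans ha ab) bh.
  have Hb0 : 0 <= F t' - F b by rewrite subr_ge0; apply: Fmono => //; exact: le_trans ab.
  have Hb1 : F t' - F b <= 1.
    have : 0 <= F b by rewrite -Ftl; apply: Fmono => //; exact: le_trans ab.
    lra.
  have /andP[xa0 xa1] := xe01 a ha'.
  have /andP[xb0 xb1] := xe01 b hb'.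
  have xab : xe a <= xe b by apply: xe_mono.
  have key := Flow a b ((F t' - F b) * xe a - xbar * M * (b - a)) (u a) ha ab bh.
  have key' : ((F t' - F b) * xe a - xbar * M * (b - a)) * (b - a) <= u a * (F b - F a).
    apply: key => t /andP[h1 h2].
    have ht : tl <= t <= th by rewrite (le_trans ha (ltW h1)) (le_trans h2 bh).
    have /andP[mf fM] := fmM t ht.
    have f0 : 0 <= f t := le_trans (ltW m0) mf.
    have /andP[xt0 xt1] := xe01 t ht.
    have e1 := env a t ha' ht.
    have p0 : (t - a) * xe t <= (b - a) * xbar.
      by apply: ler_pM => //; [rewrite subr_ge0 ltW | lra].
    have p1 : (u t - (b - a) * xbar) * f t <= u a * f t.
      by apply: ler_wpM2r => //; lra.
    have p2 : (b - a) * xbar * f t <= (b - a) * xbar * M.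
      by apply: ler_wpM2l => //; rewrite mulr_ge0 // ?subr_ge0 // ltW.
    have p3 : (F t' - F b) * xe a <= (1 - F t) * xe t.
      apply: ler_pM => //; last by apply: xe_mono; rewrite // ?(ltW h1) // (le_trans h2 bh).
      have : F t <= F b by apply: Fmono => //; rewrite ?(le_trans ha (ltW h1)).
      lra.
    have := A4' t ht.
    have q1 : (u t - (b - a) * xbar) * f t = u t * f t - (b - a) * xbar * f t by ring.
    have q2 : xbar * M * (b - a) = (b - a) * xbar * M by ring.
    lra.
  have e2 := env a b ha' hb'.
  have up : (u b - u a) * (F t' - F b) <= ((b - a) * xe b) * (F t' - F b).
    by apply: ler_wpM2r => //; lra.
  have q0 : 0 <= (b - a) * (xe b - xe a) by rewrite mulr_ge0 // subr_ge0.
  have q1 : (F t' - F b) * ((b - a) * (xe b - xe a)) <= (b - a) * (xe b - xe a).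
    by rewrite ler_piMl.
  have -> : G a - G b = u a * (F b - F a) - (u b - u a) * (F t' - F b).
    by rewrite /G; ring.
  have r1 : ((F t' - F b) * xe a - xbar * M * (b - a)) * (b - a) =
     (F t' - F b) * xe a * (b - a) - xbar * M * (b - a) ^+ 2 by ring.
  have r2 : (b - a) * xe b * (F t' - F b) =
     (F t' - F b) * ((b - a) * (xe b - xe a)) + (F t' - F b) * xe a * (b - a) by ring.
  lra.
have Gmono : forall a b, tl <= a -> a <= b -> b <= t' -> G b <= G a.
  move=> a b ha ab bt.
  have M0 : 0 <= M.
    have htl : tl <= tl <= th by rewrite lexx ltW.
    by have /andP[h1 h2] := fmM tl htl; apply: le_trans h2; apply: le_trans (ltW m0) h1.
  set C := (b - a) * xbar * (1 + M * (b - a)).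
  have C0 : 0 <= C.
    have ba0 : 0 <= b - a by rewrite subr_ge0.
    have : 0 <= M * (b - a) by rewrite mulr_ge0.
    move=> hM; rewrite /C; apply: mulr_ge0; first by rewrite mulr_ge0 // ltW.
    lra.
  apply/ler_addgt0Pr => e e0.
  set n := (Num.Def.archi_bound (C / e)).+1.
  have n0 : (0 : R) < n%:R by rewrite ltr0n.
  have Cn : C / n%:R < e.
    rewrite ltr_pdivrMr // mulrC -ltr_pdivrMr //.
    apply: lt_le_trans (archi_boundP _) _; first by rewrite divr_ge0 // ltW.
    by rewrite ler_nat.
  set d := (b - a) / n%:R.
  have d0 : 0 <= d by rewrite divr_ge0 ?subr_ge0 // ltW.
  have nd : n%:R * d = b - a by rewrite /d mulrC divfK // lt0r_neq0.
  set P := fun k : nat => a + k%:R * d.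
  have Pbnd : forall k, (k <= n)%N -> a <= P k <= b.
    move=> k kn; rewrite /P lerDl mulr_ge0 //=.
    have : k%:R * d <= n%:R * d by rewrite ler_wpM2r // ler_nat.
    lra.
  have claim : forall k, (k <= n)%N ->
      - (d * (xe (P k) - xe a)) - k%:R * (xbar * M * d ^+ 2) <= G a - G (P k).
    elim => [|k IH] kn.
      by rewrite /P mul0r addr0 !subrr mulr0 mul0r; lra.
    have kn' : (k <= n)%N by apply: ltnW.
    have /andP[h1 h2] := Pbnd k kn'.
    have /andP[h3 h4] := Pbnd k.+1 kn.
    have PS : P k.+1 = P k + d by rewrite /P -addn1 natrD mulrDl mul1r addrA.
    have hPP : P k <= P k.+1 by rewrite PS lerDl.
    have := step (P k) (P k.+1) (le_trans ha h1) hPP (le_trans h4 bt).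
    have := IH kn'.
    rewrite PS.
    have -> : P k + d - P k = d by ring.
    have e1 : d * (xe (P k + d) - xe a) = d * (xe (P k) - xe a) + d * (xe (P k + d) - xe (P k)) by ring.
    have e2 : k.+1%:R * (xbar * M * d ^+ 2) = k%:R * (xbar * M * d ^+ 2) + xbar * M * d ^+ 2.
      by rewrite -addn1 natrD; ring.
    lra.
  have := claim n (leqnn n).
  have -> : P n = b by rewrite /P nd; ring.
  have xd : d * (xe b - xe a) <= d * xbar.
    apply: ler_wpM2l => //.
    have hb' : tl <= b <= th by rewrite (le_trans ha ab) (le_trans bt t'th).
    have ha' : tl <= a <= th by rewrite ha (le_trans ab (le_trans bt t'th)).
    have /andP[x1 _] := xe01 a ha'; have /andP[_ x2] := xe01 b hb'.
    lra.
  have eC : d * xbar + n%:R * (xbar * M * d ^+ 2) = C / n%:R.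
    rewrite /C -nd /d; field; exact: lt0r_neq0.
  lra.
have Gtl : G tl = u tl * F t' by rewrite /G Ftl subr0.
rewrite /revenue -/F -/u.
have Sutl : [set t | tl <= t <= t'] `&` [set t | u tl <= u t] = `[tl, t']%classic.
  apply/seteqP; split => t /=.
    by move=> [h _]; rewrite in_itv /=.
  rewrite in_itv /= => /andP[h1 h2]; split; first by rewrite h1 h2.
  by apply: u_mono => //; exact: le_trans t'th.
rewrite Sutl (Fmass tl (lexx tl) (ltW tlt')) Ftl subr0 divff ?mulr1; last exact: lt0r_neq0.
have [p0|p0] : p <= 0 \/ 0 < p by case: (leP p 0); [left|right].
  apply: le_trans u_ge0.
  apply: mulr_le0_ge0 => //; apply: divr_ge0; last exact: ltW.
  apply: Rintegral_ge0 => t [/andP[h1 h2] _]; apply/ltW/fpos.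
  by rewrite h1 (le_trans h2 t'th).
have [pt'|pt'] : u t' < p \/ p <= u t' by case: (ltP (u t') p); [left|right].
  have -> : [set t | tl <= t <= t'] `&` [set t | p <= u t] = set0.
    apply/seteqP; split => t //= [/andP[h1 h2] h3].
    have : u t <= u t' by apply: u_mono.
    lra.
  by rewrite /dmass Rintegral_set0 mul0r mulr0.
set S := [set t | tl <= t <= t'] `&` [set t | p <= u t].
have St' : S t'.
  by split => //=; rewrite (ltW tlt') lexx.
have lbS : lbound S tl by move=> t [/andP[h _] _].
have hlS : has_lbound S by exists tl.
have hiS : has_inf S by split => //; exists t'.
set c := inf S.
have cge : lbound S c by exact: ge_inf.
have tlc : tl <= c by apply: lb_le_inf => //; exists t'.
have ct' : c <= t' by exact: cge.
have hc' : tl <= c <= th by rewrite tlc (le_trans ct' t'th).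
have puc : p <= u c.
  apply/ler_addgt0Pr => e e0.
  have [s Ss sc] := inf_adherent (divr_gt0 e0 xbar0) hiS.
  have cs : c <= s := cge s Ss.
  case: Ss => /= /andP[s1 s2] ps.
  have hs : tl <= s <= th by rewrite s1 (le_trans s2 t'th).
  have := env c s hc' hs.
  have /andP[x0 x1] := xe01 s hs.
  have : (s - c) * xe s <= (e / xbar) * xbar.
    apply: ler_pM => //; first by rewrite subr_ge0.
    rewrite -/c in sc; lra.
  rewrite divfK ?lt0r_neq0 //.
  lra.
have -> : S = `[c, t']%classic.
  apply/seteqP; split => t.
    move=> St; rewrite /= in_itv /= cge //=; by case: St => /= /andP[].
  rewrite /= in_itv /= => /andP[h1 h2]; split; first by rewrite /= (le_trans tlc h1) h2.
  by apply: le_trans puc _; apply: u_mono => //; exact: le_trans t'th.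
rewrite Fmass // mulrA.
have Gc := Gmono tl c (lexx tl) tlc ct'.
rewrite /G Ftl subr0 in Gc.
rewrite ler_pdivrMr // mulrC.
apply: le_trans Gc.
rewrite mulrC; apply: ler_wpM2r => //.
rewrite subr_ge0; apply: Fmono => //.
Qed.
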